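(* Let $f_{SN_3}(x)=\sqrt{\frac{x^2+1}{2}}-\frac{x+\sqrt x+1}{3}$ for $x\in(0,\infty)$, let $f_{SN_3}^*(u)=u\,f_{SN_3}\!\left(\frac{1-u}{u}\right)$ for $u\in(0,1)$, extended by continuity to $[0,1]$ (explicitly $f_{SN_3}^*(u)=\frac{\sqrt2}{2}\sqrt{u^2+(1-u)^2}-\frac13\left(1+\sqrt{u(1-u)}\right)$), and define $\overline M_{SN_3}(C_1,C_2)=E_X\{f_{SN_3}^*(P(C_2\mid x))\}$. Then $$P_e\le \frac12\left[1-\frac{6}{3\sqrt2-2}\,\overline M_{SN_3}(C_1,C_2)\right].$$
   Context: Two-class decision problem: classes $C_1,C_2$, an observation $x$ in a space $\mathrm X$ with density $p(x)$, and a posteriori probabilities $P(C_1\mid x),P(C_2\mid x)\ge0$ with $P(C_1\mid x)+P(C_2\mid x)=1$. $E_X\{g(x)\}=\int_{\mathrm X} g(x)p(x)\,dx$. $P_e=E_X\{\min(P(C_1\mid x),P(C_2\mid x))\}$ is the Bayesian probability of error. *)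

(* Defs.v *)
From HB Require Import structures.
From mathcomp Require Import all_boot all_order all_algebra.
From mathcomp Require Import all_classical all_reals all_analysis.
Set Implicit Arguments. Unset Strict Implicit. Unset Printing Implicit Defensive.
Import Order.TTheory GRing.Theory Num.Theory.
Local Open Scope ring_scope.

Definition fSN3 {R : realType} (x : R) : R :=
  Num.sqrt ((x ^+ 2 + 1) / 2) - (x + Num.sqrt x + 1) / 3.

(* f*_{SN_3}(u) = u f_{SN_3}((1-u)/u) on (0,1), extended by continuity to
   [0,1]: the limits at u -> 0+ and u -> 1- are both sqrt2/2 - 1/3. *)
Definition fSN3star {R : realType} (u : R) : R :=
  if (0 < u) && (u < 1) then u * fSN3 ((1 - u) / u)
  else Num.sqrt 2 / 2 - 1 / 3.

(* Main.v *)
Require Import Defs.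
From HB Require Import structures.
From mathcomp Require Import all_boot all_order all_algebra.
From mathcomp Require Import all_classical all_reals all_analysis.
From mathcomp Require Import measurable_realfun.
From mathcomp Require Import ring lra.
Set Implicit Arguments.
Import Order.TTheory GRing.Theory Num.Theory.
Local Open Scope ring_scope.

Lemma key {R : realType} (v s t r : R) : 0 <= v -> v <= 1/2 -> 0 <= r -> r ^+ 2 = 2 ->
  0 <= s -> s ^+ 2 = (v ^+ 2 + (1 - v) ^+ 2) / 2 -> 0 <= t -> t ^+ 2 = v * (1 - v) ->
  3 * s - 1 - t <= (3 * r - 2) * (1/2 - v).
Proof.
move=> v0 v1 r0 r2 s0 s2 t0 t2.
have r1 : 1 <= r by nra.
set q := 1 - 2 * v.
have hq : 0 <= (r - 1) * q * (1 - q).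
  by apply: mulr_ge0; [apply: mulr_ge0|]; rewrite /q; lra.
have hb : s <= (1 + (r - 1) * q) / 2.
  have b0 : 0 <= (1 + (r - 1) * q) / 2 by rewrite /q; nra.
  have : s ^+ 2 <= ((1 + (r - 1) * q) / 2) ^+ 2 by rewrite s2 /q; rewrite /q in hq; nra.
  nra.
have ht : v <= t by nra.
rewrite /q in hb; nra.
Qed.

Definition gS {R : realType} (u : R) : R :=
  Num.sqrt ((u ^+ 2 + (1 - u) ^+ 2) / 2) - (1 + Num.sqrt (u * (1 - u))) / 3.

Lemma mul_sqrt {R : realType} {u a : R} : 0 <= u -> 0 <= a ->
  u * Num.sqrt a = Num.sqrt (u ^+ 2 * a).
Proof.
move=> u0 a0; by rewrite (sqrtrM _ (sqr_ge0 _)) sqrtr_sqr ger0_norm.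
Qed.

Lemma fstar_eq {R : realType} (u : R) : 0 <= u <= 1 -> fSN3star u = gS u.
Proof.
move=> /andP[u0 u1]; rewrite /fSN3star /gS.
case: ifP => [/andP[u0' u1'] | hu].
  have uw : u * ((1 - u) / u) = 1 - u by field; rewrite gt_eqF.
  have w0 : 0 <= (1 - u) / u by apply: divr_ge0; lra.
  rewrite /fSN3 mulrBr (mul_sqrt (ltW u0')); last by apply: divr_ge0 => //; nra.
  have -> : u * (((1 - u) / u + Num.sqrt ((1 - u) / u) + 1) / 3) =
     (u * ((1 - u) / u) + u * Num.sqrt ((1 - u) / u) + u) / 3 by ring.
  rewrite uw.
  rewrite (mul_sqrt (ltW u0') w0).
  have -> : u ^+ 2 * ((((1 - u) / u) ^+ 2 + 1) / 2) = (u ^+ 2 + (1 - u) ^+ 2) / 2.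
    by field; rewrite gt_eqF.
  have -> : u ^+ 2 * ((1 - u) / u) = u * (1 - u) by field; rewrite gt_eqF.
  congr (_ - _); congr (_ / _); lra.
have : u = 0 \/ u = 1.
  move: hu; case: (ltrP 0 u) => h; case: (ltrP u 1) => h' //= _; lra.
have e : Num.sqrt (1 / 2 : R) = Num.sqrt 2 / 2.
  have -> : (1 / 2 : R) = 2 / 2 ^+ 2 by field.
  by rewrite sqrtrM ?invr_ge0 ?exprn_ge0 // -exprVn sqrtr_sqr ger0_norm.
case=> ->; rewrite ?subr0 ?subrr ?mul0r ?mulr0 ?sqrtr0 ?addr0 ?expr1n ?expr0n ?addr0 ?add0r; rewrite -e //=; congr (_ - _); rewrite ?addr0 //.
Qed.

Lemma pointwise {R : realType} (u : R) : 0 <= u <= 1 ->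
  Num.min (1 - u) u <= 1 / 2 - 3 / (3 * Num.sqrt 2 - 2) * gS u.
Proof.
move=> /andP[u0 u1].
set r := Num.sqrt (2 : R).
have r0 : 0 <= r by apply: sqrtr_ge0.
have r2 : r ^+ 2 = 2 by rewrite sqr_sqrtr.
have k0 : 0 < 3 * r - 2 by nra.
set ki := (3 * r - 2)^-1.
have kk : (3 * r - 2) * ki = 1 by rewrite mulfV // gt_eqF.
have ki0 : 0 < ki by rewrite invr_gt0.
rewrite /gS.
set s := Num.sqrt ((u ^+ 2 + (1 - u) ^+ 2) / 2).
set t := Num.sqrt (u * (1 - u)).
have s0 : 0 <= s by apply: sqrtr_ge0.
have t0 : 0 <= t by apply: sqrtr_ge0.
have s2 : s ^+ 2 = (u ^+ 2 + (1 - u) ^+ 2) / 2 by rewrite sqr_sqrtr //; nra.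
have t2 : t ^+ 2 = u * (1 - u) by rewrite sqr_sqrtr //; nra.
have H : 3 * s - 1 - t <= (3 * r - 2) * (1/2 - Num.min (1 - u) u).
  case: (leP u (1/2)) => hu.
    rewrite (_ : Num.min (1 - u) u = u); last by apply/min_idPr; lra.
    exact: key.
  rewrite (_ : Num.min (1 - u) u = 1 - u); last by apply/min_idPl; lra.
  apply: key => //; try lra.

have : 0 <= ki * ((3 * r - 2) * (1/2 - Num.min (1 - u) u) - (3 * s - 1 - t)).
  by apply: mulr_ge0; lra.
rewrite /ki mulrBr mulrA (mulrC _ (3 * r - 2)) kk mul1r => h.
rewrite -/ki; nra.
Qed.

Lemma sqrt_comp_meas {d} {X : measurableType d} {R : realType} (f : X -> R) :
  measurable_fun setT f -> measurable_fun setT (fun x => Num.sqrt (f x)).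
Proof.
move=> mf; exact: (measurableT_comp (continuous_measurable_fun (@sqrt_continuous R)) mf).
Qed.

Theorem mainTheorem3 (d : measure_display) (X : measurableType d)
  (R : realType) (PX : probability X R) (P1 P2 : X -> R)
  (mP1 : measurable_fun setT P1) (mP2 : measurable_fun setT P2)
  (P1ge0 : forall x, 0 <= P1 x) (P2ge0 : forall x, 0 <= P2 x)
  (P12 : forall x, P1 x + P2 x = 1) :
  Rintegral PX setT (fun x => Num.min (P1 x) (P2 x))
  <= 1 / 2 * (1 - 6 / (3 * Num.sqrt 2 - 2)
                  * Rintegral PX setT (fun x => fSN3star (P2 x))).
Proof.
have u01 : forall x, 0 <= P2 x <= 1.
  by move=> x; apply/andP; split => //; have := P1ge0 x; have := P12 x; lra.
have integ : forall (f : X -> R) (M : R), measurable_fun setT f ->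
    (forall x, `|f x| <= M) -> PX.-integrable setT (EFin \o f).
  move=> f M mf fM; apply: measurable_bounded_integrable => //.
    by apply: (@le_lt_trans _ _ 1%E); [apply: probability_le1 | exact: ltry].
  exists M; split; first exact: num_real.
  by move=> y My x _; exact: le_trans (fM x) (ltW My).
have -> : Rintegral PX setT (fun x => fSN3star (P2 x)) = Rintegral PX setT (fun x => gS (P2 x)).
  by apply: eq_Rintegral => x _; exact: fstar_eq.
have mg : measurable_fun setT (fun x => gS (P2 x)).
  rewrite /gS; apply: measurable_funB.
    apply: sqrt_comp_meas; apply: measurable_funM => //.
    apply: measurable_funD; apply: measurable_funX => //.
    exact: measurable_funB.
  apply: measurable_funM => //; apply: measurable_funD => //.
  apply: sqrt_comp_meas; apply: measurable_funM => //.
  exact: measurable_funB.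
pose c : R := 3 / (3 * Num.sqrt 2 - 2).
have gb : forall x, `|gS (P2 x)| <= 2.
  move=> x; have /andP[u0 u1] := u01 x; rewrite /gS.
  set s := Num.sqrt _; set t := Num.sqrt _.
  have s0 : 0 <= s by apply: sqrtr_ge0.
  have t0 : 0 <= t by apply: sqrtr_ge0.
  have s2 : s ^+ 2 = (P2 x ^+ 2 + (1 - P2 x) ^+ 2) / 2 by rewrite sqr_sqrtr //; nra.
  have t2 : t ^+ 2 = P2 x * (1 - P2 x) by rewrite sqr_sqrtr //; nra.
  rewrite ler_norml; apply/andP; split; nra.
have ig : PX.-integrable setT (EFin \o (fun x => gS (P2 x))) by exact: integ _ 2 mg gb.
have mcg : measurable_fun setT (fun x => c * gS (P2 x)).
  by apply: measurable_funM => //; exact: measurable_cst.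
have cgb : forall x, `|c * gS (P2 x)| <= `|c| * 2.
  by move=> x; rewrite normrM; apply: ler_wpM2l.
have icg : PX.-integrable setT (EFin \o (fun x => c * gS (P2 x))) by exact: integ _ _ mcg cgb.
have imin : PX.-integrable setT (EFin \o (fun x => Num.min (P1 x) (P2 x))).
  apply: (integ _ 1).
    exact: measurable_minr.
  move=> x; have /andP[u0 u1] := u01 x; have h12 := P12 x.
  rewrite ler_norml; apply/andP; split; case: (leP (P1 x) (P2 x)) => h; lra.
have -> : 1 / 2 * (1 - 6 / (3 * Num.sqrt 2 - 2) * \int[PX]_(x in setT) gS (P2 x))
   = 1 / 2 - c * \int[PX]_(x in setT) gS (P2 x) by rewrite /c; field; rewrite gt_eqF //; have := sqrtr_ge0 (2:R); have := sqr_sqrtr (ler0n R 2); nra.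
have -> : 1 / 2 - c * \int[PX]_(x in setT) gS (P2 x) =
    \int[PX]_(x in setT) (1 / 2 - c * gS (P2 x)).
  rewrite (@RintegralB _ _ _ PX setT (fun=> 1/2) (fun x => c * gS (P2 x))) //.
    rewrite (@RintegralZl _ _ _ PX setT (fun x => gS (P2 x))) //.
    rewrite Rintegral_cst // (_ : fine _ = 1) ?mulr1 //.
    by have := probability_setT PX => /(congr1 fine) h; exact: h.
  apply: (integ _ (1/2)) => //; idtac.
  by move=> x; rewrite ger0_norm.
apply: le_Rintegral => //.
  apply: (integ _ (1/2 + `|c| * 2)).
    by apply: measurable_funB => //; exact: measurable_cst.
  move=> x; apply: (le_trans (ler_normB _ _)); rewrite ger0_norm //.
  by rewrite lerD2l.
move=> x _; have -> : P1 x = 1 - P2 x by have := P12 x; lra.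
exact: pointwise (P2 x) (u01 x).
Qed.
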